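(* For a finite list $L=[l_1,l_2,\dots,l_n]$ of nonnegative integers, let $A(L)$ denote the number of words that contain exactly $l_j$ copies of the letter $j$ for each $1\le j\le n$ (and no other letters) and avoid the pattern $123$; the empty word is counted, so $A(L)=1$ if all $l_j=0$. If $l_1+\dots+l_n\ge 1$, then $$A(L)=\sum_{\substack{1\le i\le n\\ l_i\ge 1}} A\big([\,l_1,l_2,\dots,l_{i-1},\ l_i-1,\ l_{i+1}+l_{i+2}+\dots+l_n\,]\big),$$ where for $i=n$ the last entry $l_{i+1}+\dots+l_n$ is the empty sum $0$.
   Context: A word $w_1\cdots w_m$ over the positive integers contains a pattern $p_1\cdots p_k$ if there are indices $i_1<\dots<i_k$ such that for all $r,s$: $w_{i_r}<w_{i_s}\iff p_r<p_s$ and $w_{i_r}>w_{i_s}\iff p_r>p_s$; otherwise it avoids it. In particular, containing $123$ means having three positions $i_1<i_2<i_3$ with $w_{i_1}<w_{i_2}<w_{i_3}$. *)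

(* Defs.v *)
From mathcomp Require Import all_boot.
Set Implicit Arguments. Unset Strict Implicit. Unset Printing Implicit Defensive.

(* A word w (a seq nat of positive integers) contains the pattern p if there are
   positions i_1 < ... < i_k (selected by a mask) such that for all r, s:
   w_{i_r} < w_{i_s} <-> p_r < p_s  (quantifying over all ordered pairs also
   gives the ">" condition). *)
Definition contains_pattern (p w : seq nat) : bool :=
  [exists m : (size w).-tuple bool,
    let s := mask m w in
    (size s == size p) &&
    [forall r : 'I_(size p), forall t : 'I_(size p),
       (nth 0 s r < nth 0 s t) == (nth 0 p r < nth 0 p t)]].

Definition avoids_pattern (p w : seq nat) : bool := ~~ contains_pattern p w.

(* The multiset of letters given by L = [l_1; ...; l_n]: l_j copies of letter j. *)
Definition letters (L : seq nat) : seq nat :=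
  flatten [seq nseq (nth 0 L j) j.+1 | j <- iota 0 (size L)].

(* Words with exactly l_j copies of j (and no other letters) are exactly the
   distinct rearrangements of [letters L]; [permutations] lists them without
   duplicates. A(L) counts those avoiding 123. *)
Definition A (L : seq nat) : nat :=
  count (avoids_pattern [:: 1; 2; 3]) (permutations (letters L)).

(* Main.v *)
Require Import Defs.
From mathcomp Require Import all_boot zify.
Set Implicit Arguments. Unset Strict Implicit. Unset Printing Implicit Defensive.

Definition P123 (w : seq nat) := exists a b c, [/\ a < b, b < c & subseq [:: a; b; c] w].
Definition P12 (x : nat) (w : seq nat) := exists b c, [/\ x < b, b < c & subseq [:: b; c] w].

Lemma containsP w : contains_pattern [:: 1; 2; 3] w <-> P123 w.
Proof.
split.
- case/existsP=> m /andP[]; set s := mask m w => hs /forallP hf.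
  have hsub : subseq s w by exact: mask_subseq.
  move: hs hf hsub; case: s => [|a [|b [|c [|d s]]]] //= _ hf hsub.
  have h01 := forallP (hf (@Ordinal 3 0 isT)) (@Ordinal 3 1 isT).
  have h12 := forallP (hf (@Ordinal 3 1 isT)) (@Ordinal 3 2 isT).
  move: h01 h12 => /= /eqP h01 /eqP h12.
  by exists a, b, c; split => //; rewrite ?h01 ?h12.
- case=> a [b [c [hab hbc /subseqP [m hm hmw]]]].
  apply/existsP; exists (@Tuple _ _ m (introT eqP hm)).
  rewrite /= -hmw /=; apply/forallP => r; apply/forallP => t.
  case: r => [[|[|[|r]]] Hr] //; case: t => [[|[|[|t]]] Ht] //=;
  rewrite ?ltnn //; apply/eqP; lia.
Qed.

Lemma avoid_cons x w :
  avoids_pattern [:: 1; 2; 3] (x :: w) <-> (~ P123 w /\ ~ P12 x w).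
Proof.
rewrite /avoids_pattern; split.
- move/negP => H; split.
  + case=> a [b [c [hab hbc hs]]]; apply: H; apply/containsP.
    by exists a, b, c; split => //; apply: subseq_trans hs (subseq_cons _ _).
  + case=> b [c [hxb hbc hs]]; apply: H; apply/containsP.
    by exists x, b, c; split => //=; rewrite eqxx.
- case=> H1 H2; apply/negP => /containsP [a [b [c [hab hbc]]]] /=.
  move=> hs; move: hs; rewrite [subseq _ _]/=; case: (eqVneq a x) => [ha hs|_ hs].
  + by apply: H2; exists b, c; rewrite -ha.
  + by apply: H1; exists a, b, c.
Qed.
Definition fm (x c : nat) := minn c x.+1.

Fixpoint gm (x : nat) (D u : seq nat) : seq nat :=
  match u with
  | [::] => [::]
  | c :: u' => if c == x.+1 then head x.+1 D :: gm x (behead D) u'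
               else c :: gm x D u'
  end.

Definition geqn := fun a b : nat => b <= a.

Lemma geqn_trans : transitive geqn.
Proof. by move=> a b c; rewrite /geqn => h1 h2; apply: leq_trans h2 h1. Qed.
Lemma geqn_anti : antisymmetric geqn.
Proof. by move=> a b; rewrite /geqn => /andP[h1 h2]; apply/eqP; rewrite eqn_leq h1 h2. Qed.
Lemma geqn_total : total geqn.
Proof. by move=> a b; rewrite /geqn leq_total. Qed.

Lemma gmf x w : gm x (filter (fun c => x < c) w) (map (fm x) w) = w.
Proof.
elim: w => //= c w IH; rewrite /fm; case: (leqP c x) => hc /=.
- have -> : minn c x.+1 = c by lia.
  by rewrite (_ : (c == x.+1) = false) ?IH //; apply/eqP; lia.
- have -> : minn c x.+1 = x.+1 by lia.
  by rewrite eqxx /= IH.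
Qed.

Lemma fmg x D u : all (fun d => x < d) D -> all (fun c => c <= x.+1) u ->
  map (fm x) (gm x D u) = u.
Proof.
elim: u D => //= c u IH D hD /andP[hc hu].
case: (eqVneq c x.+1) => [->|hne] /=.
- case: D hD => [|d D] /= => [_|/andP[hd hD]].
  + by rewrite /fm minnn IH.
  + rewrite IH // /fm; congr (_ :: _); lia.
- rewrite IH // /fm; congr (_ :: _); move/eqP: hne; lia.
Qed.

Lemma filter_gm x D u : all (fun d => x < d) D -> all (fun c => c <= x.+1) u ->
  count_mem x.+1 u = size D ->
  filter (fun c => x < c) (gm x D u) = D.
Proof.
elim: u D => [|c u IH] D /=; first by case: D.
move=> hD /andP[hc hu]; case: (eqVneq c x.+1) => [hcx|hne] /=.
- case: D hD => [|d D] //= /andP[hd hD] [hs].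
  by rewrite hd IH.
- rewrite add0n => hs; rewrite IH //.
  rewrite (_ : (x < c) = false) //; move/eqP: hne; lia.
Qed.

Lemma count_gm x D u P : all (fun c => c <= x.+1) u ->
  count_mem x.+1 u = size D ->
  count P (gm x D u) = count (fun c => (c <= x) && P c) u + count P D.
Proof.
elim: u D => [|c u IH] D /=; first by case: D.
move=> /andP[hc hu]; case: (eqVneq c x.+1) => [hcx|hne] /=.
- case: D => [|d D] //= [hs].
  rewrite IH // hcx ltnn /=; lia.
- rewrite add0n => hs; rewrite IH //.
  rewrite (_ : (c <= x) = true) /=; first lia.
  by move/eqP: hne; lia.
Qed.

Lemma sorted_of_no12 (s : seq nat) :
  (forall b c, subseq [:: b; c] s -> c <= b) -> sorted geqn s.
Proof.
elim: s => // b s IH H; case: s IH H => [|c s] IH H //=.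
apply/andP; split.
- by apply: H => /=; rewrite !eqxx /=; case: s {IH}.
- apply: IH => b' c' hs; apply: H; apply: subseq_trans hs (subseq_cons _ _).
Qed.

Lemma sorted_noP12 x w : ~ P12 x w -> sorted geqn (filter (fun c => x < c) w).
Proof.
move=> H; apply: sorted_of_no12 => b c; rewrite subseq_filter /= andbT.
case/andP=> /andP[hb hc] hs; rewrite leqNgt; apply/negP => hbc.
by apply: H; exists b, c.
Qed.

Lemma noP12_sorted x w : sorted geqn (filter (fun c => x < c) w) -> ~ P12 x w.
Proof.
move=> Hs [b [c [hb hbc hs]]].
have : subseq [:: b; c] (filter (fun c => x < c) w).
  by rewrite subseq_filter /= hb hs andbT; lia.
move/(subseq_sorted geqn_trans) => /(_ Hs) /=; rewrite /geqn andbT; lia.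
Qed.

Lemma noP123_map x w : ~ P123 w -> ~ P123 (map (fm x) w).
Proof.
move=> H [a [b [c [hab hbc /subseqP [m hm hmw]]]]].
move: hmw; rewrite -map_mask.
have hsub : subseq (mask m w) w by exact: mask_subseq.
case: (mask m w) hsub => [|a' [|b' [|c' [|d' s]]]] //= hsub [ea eb ec].
apply: H; exists a', b', c'; split => //; move: ea eb ec; rewrite /fm; lia.
Qed.

Lemma noP123_unmap x w : ~ P123 (map (fm x) w) -> ~ P12 x w -> ~ P123 w.
Proof.
move=> H1 H2 [a [b [c [hab hbc hs]]]].
case: (ltnP x b) => hxb.
- apply: H2; exists b, c; split => //; exact: subseq_trans (subseq_cons _ a) hs.
- apply: H1; exists (fm x a), (fm x b), (fm x c); split.
  + rewrite /fm; lia.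
  + rewrite /fm; lia.
  + exact: (map_subseq (fm x) hs).
Qed.

Lemma lettersE (P : pred nat) L :
  count P (letters L) = \sum_(0 <= j < size L) P j.+1 * nth 0 L j.
Proof.
rewrite /letters count_flatten sumnE !big_map /index_iota subn0.
by apply: eq_bigr => j _ /=; rewrite count_nseq.
Qed.

Lemma sumn_drop k L : sumn (drop k L) = \sum_(k <= j < size L) nth 0 L j.
Proof.
elim: L k => [|a L IH] k /=; first by rewrite big_geq.
case: k => [|k] /=.
- rewrite big_nat_recl // -(IH 0) drop0 //.
- by rewrite big_add1 /= IH.
Qed.

Lemma mem_letters y L :
  (y \in letters L) = has (fun j => (0 < nth 0 L j) && (y == j.+1)) (iota 0 (size L)).
Proof.
rewrite /letters; apply/flattenP/hasP.
- case=> s /mapP [j hj ->]; rewrite mem_nseq => hy; by exists j.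
- case=> j hj hy; exists (nseq (nth 0 L j) j.+1); first exact: map_f.
  by rewrite mem_nseq.
Qed.

Definition Lp (L : seq nat) i := take i L ++ [:: (nth 0 L i).-1; sumn (drop i.+1 L)].

Lemma key L i (P : pred nat) : i < size L -> 0 < nth 0 L i ->
  count P (letters (Lp L i)) = count (fun c => P (fm i.+1 c)) (rem i.+1 (letters L)).
Proof.
move=> hi hpos.
have hx : i.+1 \in letters L.
  by rewrite mem_letters; apply/hasP; exists i; rewrite ?mem_iota ?hpos ?eqxx.
move/permP: (perm_to_rem hx) => /(_ (fun c => P (fm i.+1 c))) /=.
have -> : fm i.+1 i.+1 = i.+1 by rewrite /fm; lia.
move=> h.
suff : count P (letters (Lp L i)) + P i.+1 = count (fun c => P (fm i.+1 c)) (letters L).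
  by rewrite h; lia.
have hsz : size (Lp L i) = i.+2 by rewrite /Lp size_cat size_take hi /=; lia.
rewrite !lettersE hsz !big_nat_recr //=.
rewrite [RHS](big_cat_nat _ (n := i)) //=; last by lia.
rewrite [X in _ = _ + X](big_cat_nat _ (n := i.+1)) //= big_nat1.
have -> : \sum_(i.+1 <= j < size L) (P (fm i.+1 j.+1)) * nth 0 L j
        = P i.+2 * \sum_(i.+1 <= j < size L) nth 0 L j.
  rewrite big_distrr /=; apply: eq_big_nat => j hj.
  by rewrite /fm (_ : minn j.+1 i.+2 = i.+2) //; lia.
have -> : \sum_(0 <= j < i) (P (fm i.+1 j.+1)) * nth 0 L j
        = \sum_(0 <= j < i) P j.+1 * nth 0 (Lp L i) j.
  apply: eq_big_nat => j hj.
  have hji : j < i by lia.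
  rewrite /fm /Lp nth_cat size_take hi hji nth_take //.
  by rewrite (_ : minn j.+1 i.+2 = j.+1) //; lia.
rewrite -sumn_drop /Lp nth_cat size_take hi ltnn subnn /=.
rewrite nth_cat size_take hi ltnNge leqnSn /= subSnn /=.
rewrite /fm (_ : minn i.+1 i.+2 = i.+1); last by lia.
case: (nth 0 L i) hpos => // l _ /=.
case: (P i.+1); lia.
Qed.

Lemma count_split x (P : pred nat) s :
  count (fun d => (fm x d <= x) && P (fm x d)) s + count (predI P (fun c => x < c)) s
  = count P s.
Proof.
elim: s => //= d s <-; rewrite /fm; case: (leqP d x) => h /=.
- have -> : minn d x.+1 = d by lia.
  rewrite h /= andbF; lia.
- have -> : minn d x.+1 = x.+1 by lia.
  rewrite ltnn /= andbT; lia.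
Qed.

Lemma step L i : i < size L -> 0 < nth 0 L i ->
  count (fun w => avoids_pattern [:: 1; 2; 3] (i.+1 :: w))
        (permutations (rem i.+1 (letters L))) = A (Lp L i).
Proof.
move=> hi hpos.
set x := i.+1; set M := rem x (letters L); set M' := letters (Lp L i).
set F := filter (fun w => avoids_pattern [:: 1; 2; 3] (x :: w)) (permutations M).
rewrite -size_filter /A -size_filter -/F.
have Hdom : forall w, w \in F -> [/\ perm_eq w M, ~ P123 w & ~ P12 x w].
  move=> w; rewrite mem_filter mem_permutations => /andP [/avoid_cons [n1 n2] p].
  by split.
have Hinj : {in F &, injective (map (fm x))}.
  move=> w1 w2 /Hdom [p1 _ n1] /Hdom [p2 _ n2] e.
  rewrite -(gmf x w1) -(gmf x w2) e; congr gm.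
  apply: (sorted_eq geqn_trans geqn_anti (sorted_noP12 n1) (sorted_noP12 n2)).
  by apply: perm_filter; rewrite (permPl p1) perm_sym.
have HM : forall w, perm_eq w M -> perm_eq (map (fm x) w) M'.
  move=> w p; apply/permP => P; rewrite count_map (permP p) /M' key //.
have Hmap : map (map (fm x)) F =i filter (avoids_pattern [:: 1; 2; 3]) (permutations M').
  move=> u; apply/mapP/idP.
  - case=> w /Hdom [p n1 n2] ->; rewrite mem_filter mem_permutations HM // andbT.
    by rewrite /avoids_pattern; apply/negP => /containsP; apply: noP123_map.
  - rewrite mem_filter mem_permutations => /andP [hav pu].
    set D := sort geqn (filter (fun c => x < c) M).
    have hD : all (fun d => x < d) D by rewrite all_sort filter_all.
    have hcnt : count_mem x.+1 u = size D.
      rewrite (permP pu) /M' key // size_sort size_filter; apply: eq_count => c /=.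
      rewrite /fm; lia.
    have hall : all (fun c => c <= x.+1) u.
      apply/allP => c; rewrite (perm_mem pu) -has_pred1 has_count /M' key // -has_count.
      by case/hasP => d _ /= /eqP <-; rewrite /fm; lia.
    exists (gm x D u); last by rewrite fmg.
    have hf : filter (fun c => x < c) (gm x D u) = D by exact: filter_gm.
    have n2 : ~ P12 x (gm x D u).
      apply: noP12_sorted; rewrite hf /D; exact: (sort_sorted geqn_total).
    rewrite mem_filter mem_permutations; apply/andP; split.
    + apply/(avoid_cons x (gm x D u)); split => //.
      apply: noP123_unmap n2; rewrite fmg // => /containsP h.
      by move/negP: hav.
    + apply/permP => P; rewrite count_gm // (permP pu) /M' key // count_sort.
      rewrite count_filter -(count_split x P M); congr (_ + _).
rewrite -(size_map (map (fm x)) F); apply: perm_size; apply: uniq_perm Hmap.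
- by rewrite (map_inj_in_uniq Hinj) filter_uniq // permutations_uniq.
- by rewrite filter_uniq // permutations_uniq.
Qed.

Lemma count_allpairs (P : pred (seq nat)) (s : seq nat) (t : nat -> seq (seq nat)) :
  count P [seq x :: y | x <- s, y <- t x] =
  \sum_(x <- s) count (fun y => P (x :: y)) (t x).
Proof.
elim: s => [|x s IH] /=; first by rewrite big_nil.
by rewrite count_cat count_map IH big_cons.
Qed.

Lemma size_letters L : size (letters L) = sumn L.
Proof.
rewrite -(count_predT (letters L)) lettersE -(drop0 L) sumn_drop drop0.
by apply: eq_bigr => j _; rewrite mul1n.
Qed.

Theorem theorem1 (L : seq nat) (hL : 1 <= sumn L) :
  A L = \sum_(i < size L | 0 < nth 0 L i)
          A (take i L ++ [:: (nth 0 L i).-1; sumn (drop i.+1 L)]).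
Proof.
have hs : 0 < size (letters L) by rewrite size_letters.
rewrite {1}/A (permP (permutationsE hs)) count_allpairs.
rewrite (perm_big (map succn (filter (fun j => 0 < nth 0 L j) (iota 0 (size L))))).
- rewrite big_map big_filter.
  apply: (eq_trans _ (@big_mkord nat 0 addn (size L) (fun i => 0 < nth 0 L i) (fun i => A (Lp L i)))).
  rewrite /index_iota subn0.
  rewrite big_seq_cond [RHS]big_seq_cond; apply: eq_bigr => j /andP [hj hp].
  by rewrite mem_iota in hj; apply: step.
- apply: uniq_perm; first exact: undup_uniq.
  + by rewrite (map_inj_uniq succn_inj) filter_uniq // iota_uniq.
  + move=> y; rewrite mem_undup mem_letters; apply/hasP/mapP.
    * by case=> j hj /andP [hp /eqP ->]; exists j; rewrite // mem_filter hp.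
    * case=> j; rewrite mem_filter => /andP [hp hj] ->.
      by exists j => //; rewrite hp eqxx.
Qed.
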